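(* Let $n\geq 1$ and let $H$ be an irreducible subgroup of $SL(n,\mathbb{C})$. For every subgroup $A$ of $Z_n(H)$ one has $Z_{PSL(n,\mathbb{C})}\big(Z_{PSL(n,\mathbb{C})}(A)\big)=A$. In particular, every subgroup of $Z_n(H)$ is itself the centralizer in $PSL(n,\mathbb{C})$ of an irreducible subgroup of $PSL(n,\mathbb{C})$.
   Context: Let $\xi=e^{2\pi i/n}$ and $\pi_n:SL(n,\mathbb{C})\to PSL(n,\mathbb{C})=SL(n,\mathbb{C})/\langle\xi I_n\rangle$ the quotient map. A subgroup $H\le SL(n,\mathbb{C})$ is irreducible if no nonzero proper subspace of $\mathbb{C}^n$ is $H$-invariant; a subgroup of $PSL(n,\mathbb{C})$ is irreducible if its preimage under $\pi_n$ is. $Z_G(S)$ denotes the centralizer of $S$ in $G$, and $Z_n(H)=Z_{PSL(n,\mathbb{C})}(\pi_n(H))$. *)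

(* Defs.v *)
(* C is modelled by an arbitrary numClosedFieldType F
   (algebraically closed number field, e.g. algC; C is an instance). *)
From HB Require Import structures.
From mathcomp Require Import all_boot all_order all_algebra.
Set Implicit Arguments. Unset Strict Implicit. Unset Printing Implicit Defensive.
Import Order.TTheory GRing.Theory Num.Theory.
Local Open Scope ring_scope.

Definition mset (F : numClosedFieldType) (n : nat) := 'M[F]_n -> Prop.

Definition is_SL_subgroup (F : numClosedFieldType) (n : nat) (H : mset F n) : Prop :=
  [/\ forall g, H g -> \det g = 1,
      H 1%:M,
      forall g h, H g -> H h -> H (g *m h)
    & forall g, H g -> H (invmx g)].

(* Subgroups of PSL(n,F) = SL(n,F)/<xi I> are represented by their preimages
   under pi_n: subgroups of SL(n,F) stable under multiplication by the
   scalars c I with c^n = 1 (the group <xi I>). *)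
Definition is_PSL_subgroup (F : numClosedFieldType) (n : nat) (A : mset F n) : Prop :=
  is_SL_subgroup A /\ (forall g (c : F), A g -> c ^+ n = 1 -> A (c *: g)).

(* Preimage pi_n^{-1}(pi_n(H)) of the image of a subset H of SL(n,F). *)
Definition satur (F : numClosedFieldType) (n : nat) (H : mset F n) : mset F n :=
  fun g => exists h (c : F), [/\ H h, c ^+ n = 1 & g = c *: h].

(* Irreducibility of a set of matrices acting on column vectors F^n:
   a subspace V of F^n is encoded as the row space of a matrix U whose rows
   are the (transposed) vectors of V; h V <= V reads (U *m h^T <= U)%MS. *)
Definition irreducible (F : numClosedFieldType) (n : nat) (H : mset F n) : Prop :=
  forall U : 'M[F]_n, (forall h, H h -> (U *m h^T <= U)%MS) ->
    (U <= (0 : 'M[F]_n))%MS \/ ((1%:M : 'M[F]_n) <= U)%MS.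

(* Preimage in SL(n,F) of the centralizer in PSL(n,F) of pi_n(S):
   g commutes with every s in S modulo <xi I>. *)
Definition pcent (F : numClosedFieldType) (n : nat) (S : mset F n) : mset F n :=
  fun g => \det g = 1 /\
    forall s, S s -> exists c : F, c ^+ n = 1 /\ g *m s = c *: (s *m g).

(* Z_n(H) = Z_{PSL}(pi_n(H)), as preimage in SL(n,F). *)
Definition Zn (F : numClosedFieldType) (n : nat) (H : mset F n) : mset F n :=
  pcent (satur H).

(* Main.v *)
Require Import Defs.
From mathcomp Require Import all_boot all_order all_algebra.
From Stdlib Require Import Classical.
Import GRing.Theory Num.Theory.
Local Open Scope ring_scope.

Set Implicit Arguments. Unset Strict Implicit. Unset Printing Implicit Defensive.

Lemma schur (F : numClosedFieldType) n (H : mset F n.+1) :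
  irreducible H -> forall x : 'M[F]_n.+1,
  (forall h, H h -> x *m h = h *m x) -> exists l, x = l%:M.
Proof.
move=> irrH x cx.
have [a ea] : exists a, eigenvalue x^T a.
  have /closed_rootP [a rAa] : size (char_poly x^T) != 1%N by rewrite size_char_poly.
  by exists a; rewrite eigenvalue_root_char.
set U := eigenspace x^T a.
have EU : U *m x^T = a *: U by apply/eigenspaceP.
have inv : forall h, H h -> (U *m h^T <= U)%MS.
  move=> h Hh; apply/eigenspaceP.
  by rewrite -mulmxA -trmx_mul cx // trmx_mul mulmxA EU scalemxAl.
case: (irrH U inv) => [U0 | full].
  by move: ea; rewrite /eigenvalue -/U -submx0 U0.
exists a; have := eigenspaceP full; rewrite mul1mx => E.
rewrite -[x]trmxK E; apply/matrixP => i j; rewrite !mxE eq_sym; case: eqP => _; by rewrite ?mulr1 ?mulr0.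
Qed.

Lemma mxcL (F : fieldType) n (q X Y : 'M[F]_n) : q \in unitmx -> q *m X = q *m Y -> X = Y.
Proof. by move=> qU /(congr1 (mulmx (invmx q))); rewrite !mulKmx. Qed.

Lemma mxcR (F : fieldType) n (q X Y : 'M[F]_n) : q \in unitmx -> X *m q = Y *m q -> X = Y.
Proof. by move=> qU /(congr1 (mulmx^~ (invmx q))); rewrite !mulmxK. Qed.

Lemma det1U (F : fieldType) n (q : 'M[F]_n) : \det q = 1 -> q \in unitmx.
Proof. by rewrite unitmxE => ->; rewrite unitr1. Qed.

Lemma nunit0 (F : fieldType) n : (0 : 'M[F]_n.+1) \notin unitmx.
Proof. by rewrite unitmxE det0 unitr0. Qed.

Lemma cnz (F : fieldType) n (q h : 'M[F]_n.+1) c :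
  q \in unitmx -> h \in unitmx -> q *m h = c *: (h *m q) -> c != 0.
Proof.
move=> qU hU E; apply/eqP => c0; move: E; rewrite c0 scale0r => E.
by have := unitmx_mul q h; rewrite E qU hU (negPf (nunit0 _ _)).
Qed.

Lemma invL (F : fieldType) n (q h : 'M[F]_n) c :
  q \in unitmx -> c != 0 -> q *m h = c *: (h *m q) ->
  invmx q *m h = c^-1 *: (h *m invmx q).
Proof.
move=> qU c0 E; apply: (mxcL qU); apply: (mxcR qU).
rewrite mulKVmx // -!scalemxAr -!scalemxAl !mulmxA mulmxKV // E scalerA mulVf //.
by rewrite scale1r.
Qed.

Lemma same_char (F : fieldType) n (p q h : 'M[F]_n) c :
  q \in unitmx -> c != 0 -> p *m h = c *: (h *m p) -> q *m h = c *: (h *m q) ->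
  (p *m invmx q) *m h = h *m (p *m invmx q).
Proof.
move=> qU c0 Ep Eq.
rewrite -mulmxA (invL qU c0 Eq) -scalemxAr [p *m (h *m _)]mulmxA Ep.
by rewrite -!scalemxAl scalerA mulVf // scale1r mulmxA.
Qed.

Definition inG (F : fieldType) n (H : 'M[F]_n -> Prop) (u : 'M[F]_n) :=
  u \in unitmx /\ forall h, H h -> exists c, u *m h = c *: (h *m u).

Lemma SLU (F : numClosedFieldType) n (H : mset F n) h : is_SL_subgroup H -> H h -> h \in unitmx.
Proof. by case=> dH _ _ _ Hh; apply: det1U; apply: dH. Qed.

Lemma inG_mul (F : numClosedFieldType) n (H : mset F n) u w :
  inG H u -> inG H w -> inG H (u *m w).
Proof.
move=> [uU cu] [wU cw]; split; first by rewrite unitmx_mul uU wU.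
move=> h Hh; have [c1 E1] := cu h Hh; have [c2 E2] := cw h Hh.
exists (c1 * c2); rewrite -mulmxA E2 -scalemxAr [u *m (h *m w)]mulmxA E1 -scalemxAl scalerA.
by rewrite mulmxA mulrC.
Qed.

Lemma cuniq (F : fieldType) n (y h : 'M[F]_n.+1) c1 c2 :
  y \in unitmx -> h \in unitmx -> y *m h = c1 *: (h *m y) -> y *m h = c2 *: (h *m y) -> c1 = c2.
Proof.
move=> yU hU -> /eqP; rewrite -subr_eq0 -scalerBl scaler_eq0 subr_eq0 => /orP[/eqP //|/eqP E].
by have := unitmx_mul h y; rewrite E hU yU (negPf (nunit0 _ _)).
Qed.

Lemma comm_scalar (F : numClosedFieldType) n (H : mset F n.+1) u w :
  is_SL_subgroup H -> irreducible H -> inG H u -> inG H w ->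
  exists b, u *m w = b *: (w *m u).
Proof.
move=> sH iH [uU cu] [wU cw].
have qU : w *m u \in unitmx by rewrite unitmx_mul uU wU.
have : forall h, H h -> (u *m w *m invmx (w *m u)) *m h = h *m (u *m w *m invmx (w *m u)).
  move=> h Hh; have [c1 E1] := cu h Hh; have [c2 E2] := cw h Hh.
  have hU := SLU sH Hh.
  have Ep : u *m w *m h = (c1 * c2) *: (h *m (u *m w)).
    by rewrite -mulmxA E2 -scalemxAr [u *m (h *m w)]mulmxA E1 -scalemxAl scalerA mulmxA mulrC.
  have Eq : w *m u *m h = (c1 * c2) *: (h *m (w *m u)).
    by rewrite -mulmxA E1 -scalemxAr [w *m (h *m u)]mulmxA E2 -scalemxAl scalerA mulmxA.
  exact: (same_char qU (cnz qU hU Eq) Ep Eq).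
move=> /(schur iH) [b Eb]; exists b.
by rewrite -(mulmxKV qU (u *m w)) Eb mul_scalar_mx scalemxAl.
Qed.

Lemma sep_char (F : numClosedFieldType) n (H : mset F n.+1) u w :
  is_SL_subgroup H -> irreducible H -> inG H u -> inG H w ->
  (forall h, H h -> forall cu cw, u *m h = cu *: (h *m u) -> w *m h = cw *: (h *m w) -> cu = cw) ->
  (u \in <[w]>)%VS.
Proof.
move=> sH iH [uU cu] [wU cw] Hc.
have : forall h, H h -> (u *m invmx w) *m h = h *m (u *m invmx w).
  move=> h Hh; have [c1 E1] := cu h Hh; have [c2 E2] := cw h Hh.
  have hU := SLU sH Hh.
  have e := Hc h Hh c1 c2 E1 E2; rewrite e in E1.
  exact: (same_char wU (cnz wU hU E2) E1 E2).
move=> /(schur iH) [b Eb]; apply/vlineP; exists b.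
by rewrite -(mulmxKV wU u) Eb mul_scalar_mx.
Qed.

Lemma notin_span (F : numClosedFieldType) n (H : mset F n.+1) (s : seq 'M[F]_n.+1) u :
  is_SL_subgroup H -> irreducible H -> free s -> (forall v, v \in s -> inG H v) -> inG H u ->
  (forall v, v \in s -> u \notin <[v]>%VS) -> u \notin <<s>>%VS.
Proof.
move=> sH iH fs sG uG nprop; apply/negP => us.
have [k uk kU] := free_span fs us.
suff k0 : forall x, x \in s -> k x = 0.
  case: uG => uU _; move: uU; rewrite uk /= big_seq big1 ?(negPf (nunit0 _ _)) //.
  by move=> x xs; rewrite k0 // scale0r.
move=> x xs; apply/eqP/negP => /negP kx.
have := nprop x xs; apply/negP/negPn.
apply: (sep_char sH iH uG (sG x xs)) => h Hh cu cx Eu Ex.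
have hU := SLU sH Hh.
have ex : forall y, exists c, (y \in s) ==> (y *m h == c *: (h *m y)).
  move=> y; case ys: (y \in s) => /=; last by exists 0.
  by have [_ cy] := sG y ys; have [c Ec] := cy h Hh; exists c; apply/eqP.
pose cf y := xchoose (ex y).
have cfP : forall y, y \in s -> y *m h = cf y *: (h *m y).
  by move=> y ys; have /implyP /(_ ys) /eqP := xchooseP (ex y).
have ecx : cx = cf x by apply: (cuniq (sG x xs).1 hU Ex (cfP x xs)).
have E1 : cu *: u = \sum_(y <- s) (k y * cf y) *: y.
  apply: (mxcL hU); rewrite -scalemxAr -Eu {1}uk mulmx_suml mulmx_sumr.
  apply: eq_big_seq => y ys.
  by rewrite -scalemxAl cfP // -!scalemxAr scalerA.
have E2 : cu *: u = \sum_(y <- s) (cu * k y) *: y.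
  by rewrite {1}uk scaler_sumr; apply: eq_bigr => y _; rewrite scalerA.
have cuS : (cu *: u \in <<s>>)%VS by rewrite memvZ.
have [k' _ k'U] := free_span fs cuS.
have e1 := k'U _ E1 x xs; have e2 := k'U _ E2 x xs.
rewrite ecx; apply: (mulfI kx); rewrite mulrC.
by rewrite /= in e1 e2; rewrite e1 e2.
Qed.

Lemma free_G (F : numClosedFieldType) n (H : mset F n.+1) (s : seq 'M[F]_n.+1) :
  is_SL_subgroup H -> irreducible H -> (forall v, v \in s -> inG H v) ->
  pairwise (fun u v => u \notin <[v]>%VS) s -> free s.
Proof.
move=> sH iH; elim: s => [|u s IH] sG pw; first exact: nil_free.
case/andP: pw => /allP au pws; rewrite free_cons.
have sG' : forall v, v \in s -> inG H v by move=> v vs; apply: sG; rewrite inE vs orbT.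
have fs := IH sG' pws.
rewrite fs andbT; apply: (notin_span sH iH fs sG'); first by apply: sG; rewrite inE eqxx.
by move=> v vs; apply: au.
Qed.

Lemma nonroot (F : numDomainType) (p : {poly F}) : p != 0 -> exists t, ~~ root p t.
Proof.
move=> p0; set rs := [seq i%:R | i <- iota 0 (size p)] : seq F.
have [/hasP [t _ rt] | /hasPn H] := boolP (has (fun t => ~~ root p t) rs); first by exists t.
have : (size rs < size p)%N.
  apply: max_poly_roots => //; first by apply/allP => t /H; rewrite negbK.
  by rewrite map_inj_uniq ?iota_uniq // => i j /eqP; rewrite eqr_nat => /eqP.
by rewrite size_map size_iota ltnn.
Qed.

Lemma two_nonroots (F : numDomainType) (p : {poly F}) : p != 0 ->
  exists t1 t2, [/\ t1 != t2, ~~ root p t1 & ~~ root p t2].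
Proof.
move=> p0; have [t1 r1] := nonroot p0.
have q0 : p * ('X - t1%:P) != 0 by rewrite mulf_neq0 // polyXsubC_eq0.
have [t2] := nonroot q0; rewrite rootM root_XsubC negb_or => /andP[r2 ne].
by exists t1, t2; rewrite eq_sym ne.
Qed.

Lemma generic_comm (F : numClosedFieldType) n (g : 'M[F]_n.+1) (P : 'M[F]_n.+1 -> Prop) :
  g \in unitmx -> (forall x t, P x -> P (x - t%:M)) ->
  (forall y, P y -> y \in unitmx -> exists c, g *m y = c *: (y *m g)) ->
  forall x, P x -> g *m x = x *m g.
Proof.
move=> gU Pt Pc x Px.
have g0 : g != 0 by apply: contraTneq gU => ->; apply: nunit0.
have Ei : forall t c, g *m (x - t%:M) = c *: ((x - t%:M) *m g) ->
    g *m x - c *: (x *m g) = ((1 - c) * t) *: g.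
  move=> t c; rewrite mulmxBr mulmxBl mul_mx_scalar mul_scalar_mx scalerBr scalerA.
  move=> E; rewrite -[g *m x](subrK (t *: g)) E mulrBl mul1r scalerBl.
  by rewrite -addrA addrC addrA subrK.
have U : forall t, ~~ root (char_poly x) t -> x - t%:M \in unitmx.
  move=> t; rewrite -eigenvalue_root_char /eigenvalue /eigenspace negbK kermx_eq0.
  by rewrite row_free_unit.
have [t1 [t2 [ne r1 r2]]] := two_nonroots (monic_neq0 (char_poly_monic x)).
have [c1 E1] := Pc _ (Pt x t1 Px) (U _ r1).
have [c2 E2] := Pc _ (Pt x t2 Px) (U _ r2).
have {}E1 := Ei _ _ E1; have {}E2 := Ei _ _ E2.
have [ec|nec] := eqVneq c1 c2.
  move: E2; rewrite -ec E1 => /eqP; rewrite -subr_eq0 -scalerBl scaler_eq0 (negPf g0) orbF.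
  rewrite -mulrBr mulf_eq0 !subr_eq0 (negPf ne) orbF => /eqP c1e.
  by move: E1; rewrite -c1e subrr mul0r scale0r scale1r => /eqP; rewrite subr_eq0 => /eqP.
have : (c1 - c2) *: (x *m g) = ((1 - c2) * t2 - (1 - c1) * t1) *: g.
  by rewrite [RHS]scalerBl -E1 -E2 scalerBl opprB [RHS]addrC addrA subrK.
move=> /(congr1 (fun M => (c1 - c2)^-1 *: M)); rewrite !scalerA mulVf ?subr_eq0 // scale1r.
set mu := _ * _ => Exg.
have -> : x = mu%:M by apply: (mxcR gU); rewrite Exg mul_scalar_mx.
by rewrite scalar_mxC.
Qed.

Lemma delta_entry1 (F : fieldType) m n p (U : 'M[F]_(m, n)) (j : 'I_n) (k : 'I_p) i l :
  (U *m delta_mx j k) i l = U i j * (l == k)%:R.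
Proof.
rewrite mxE (bigD1 j) //= big1 ?addr0 => [|m' mj]; rewrite mxE ?eqxx //=.
by rewrite (negPf mj) mulr0.
Qed.

Lemma delta_entry (F : fieldType) m n p q (U : 'M[F]_(m, n)) (V : 'M[F]_(p, q)) j k i l :
  (U *m delta_mx j k *m V) i l = U i j * V k l.
Proof.
rewrite mxE (bigD1 k) //= big1 ?addr0 => [|m' mk]; rewrite delta_entry1 ?eqxx ?mulr1 //.
by rewrite (negPf mk) mulr0 mul0r.
Qed.

Lemma max_exists (Q : nat -> Prop) N : Q 0%N -> (forall k, Q k -> (k <= N)%N) ->
  exists k, Q k /\ forall k', Q k' -> (k' <= k)%N.
Proof.
move=> Q0 QN; apply: NNPP => Hno.
have : forall m, exists k, Q k /\ (m <= k)%N.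
  elim=> [|m [k [Qk mk]]]; first by exists 0%N.
  apply: NNPP => Hn; apply: Hno; exists k; split => // k' Qk'.
  rewrite leqNgt; apply/negP => kk'; apply: Hn; exists k'; split => //.
  exact: leq_ltn_trans mk kk'.
move=> /(_ N.+1) [k [Qk Nk]]; have := QN k Qk; rewrite leqNgt.
by rewrite (leq_trans (leqnn N.+1) Nk).
Qed.

Lemma free_line_eq (F : fieldType) n (R : seq 'M[F]_n) r1 r2 :
  free R -> r1 \in R -> r2 \in R -> (r1 \in <[r2]>)%VS -> r1 = r2.
Proof.
move=> fR r1R r2R /vlineP [k E]; apply/eqP/negPn/negP => ne.
have := perm_free (perm_to_rem r1R); rewrite fR free_cons => /esym /andP [] /negP H _; apply: H.
rewrite {1}E; apply: memvZ; rewrite memv_span // (mem_rem_uniq _ (free_uniq fR)) inE r2R andbT; rewrite eq_sym; exact: ne.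
Qed.

Lemma core (F : numClosedFieldType) n (H A : mset F n.+1) g :
  is_SL_subgroup H -> irreducible H -> is_PSL_subgroup A ->
  (forall a, A a -> inG H a) -> inG H g ->
  (forall x, (forall a, A a -> x *m a = a *m x) -> g *m x = x *m g) ->
  exists a l, A a /\ g = l *: a.
Proof.
move=> sH iH [[dA A1 AM AV] AZ] AG gG gC.
have gU : g \in unitmx by case: gG.
pose good (R : seq 'M[F]_n.+1) :=
  (forall r, r \in R -> A r) /\ pairwise (fun u v => u \notin <[v]>%VS) R.
have goodF : forall R, good R -> free R.
  move=> R [RA pw]; apply: (free_G sH iH) => // v vR; exact: AG (RA v vR).
pose Q k := exists R, good R /\ size R = k.
have [k [[R [gR sR]] kmax]] : exists k, Q k /\ forall k', Q k' -> (k' <= k)%N.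
  apply: (@max_exists Q (\dim (fullv : {vspace 'M[F]_n.+1}))).
    by exists [::]; split => //; split.
  move=> k0 [R [gR <-]]; have := goodF R gR; rewrite /free => /eqP <-.
  apply: dimvS; exact: subvf.
have fR := goodF R gR; case: gR => RA pwR.
have uU : forall r, r \in R -> r \in unitmx by move=> r /RA /AG [].
have full : forall a, A a -> has (fun r => a \in <[r]>%VS) R.
  move=> a Aa; apply/negPn/negP => /hasPn na.
  have : Q k.+1.
    exists (a :: R); split; last by rewrite /= sR.
    split; first by move=> r; rewrite inE => /orP [/eqP -> //| /RA //].
    by rewrite /= pwR andbT; apply/allP => r rR; exact: na.
  by move=> /kmax; rewrite ltnn.
have [r0 r0R] : exists r0, r0 \in R.
  by have := full _ A1; case: (R) => // r s _; exists r; rewrite mem_head.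
apply: NNPP => Hno.
pose P x := \sum_(r <- R) r *m x *m invmx r.
have PC : forall x b, A b -> P x *m b = b *m P x.
  move=> x b Ab.
  pose sig r := nth 0 R (find (fun r' => b *m r \in <[r']>%VS) R).
  have sigP : forall r, r \in R -> sig r \in R /\ (b *m r \in <[sig r]>)%VS.
    move=> r rR; have hs := full _ (AM _ _ Ab (RA r rR)).
    by split; [rewrite mem_nth // -has_find | exact: (nth_find 0 hs)].
  have bU : b \in unitmx by case: (AG b Ab).
  have key : forall r, r \in R ->
      b *m (r *m x *m invmx r) = (sig r *m x *m invmx (sig r)) *m b.
    move=> r rR; have [sR' /vlineP [l El]] := sigP r rR.
    apply: (mxcR (uU r rR)).
    rewrite -(mulmxA b) mulmxKV ?uU // mulmxA El -(mulmxA _ b) El -scalemxAr mulmxKV ?uU //. by rewrite scalemxAl.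

  have sig_inj : {in R &, injective sig}.
    move=> r1 r2 r1R r2R e.
    have [_ /vlineP [l1 E1]] := sigP r1 r1R; have [_ /vlineP [l2 E2]] := sigP r2 r2R.
    rewrite e in E1.
    have l2nz : l2 != 0.
      apply/eqP => l20; move: E2; rewrite l20 scale0r => E2.
      by have := unitmx_mul b r2; rewrite E2 bU (uU r2 r2R) (negPf (nunit0 _ _)).
    have E : r1 = (l1 / l2) *: r2.
      apply: (mxcL bU); rewrite E1 -scalemxAr E2 scalerA divfK //.
    by apply: (free_line_eq fR r1R r2R); apply/vlineP; exists (l1 / l2).
  have perm : perm_eq (map sig R) R.
    have U1 : uniq (map sig R) by rewrite map_inj_in_uniq // free_uniq.
    have S1 : {subset map sig R <= R} by move=> y /mapP [r rR ->]; case: (sigP r rR).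
    have [_ E] := uniq_min_size U1 S1 (eq_leq (esym (size_map sig R))).
    exact: uniq_perm U1 (free_uniq fR) E.
  rewrite /P mulmx_suml mulmx_sumr (eq_big_seq _ key).
  rewrite -(big_map sig xpredT (fun r => r *m x *m invmx r *m b)).
  by rewrite (perm_big _ perm).
have gP : forall x, g *m P x = P x *m g.
  by move=> x; apply: gC => a Aa; exact: PC.
have exb : forall r, exists c, (r \in R) ==> (g *m r == c *: (r *m g)).
  move=> r; case rR: (r \in R); last by exists 0.
  by have [c Ec] := comm_scalar sH iH gG (AG r (RA r rR)); exists c; apply/eqP.
pose bt r := xchoose (exb r).
have btP : forall r, r \in R -> g *m r = bt r *: (r *m g).
  by move=> r rR; have /implyP /(_ rR) /eqP := xchooseP (exb r).
have ident : forall k0 q, \sum_(r <- R) (bt r * invmx r k0 q) *: (r *m g) =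
                         \sum_(r <- R) ((invmx r *m g) k0 q) *: r.
  move=> k0 q; apply/matrixP => p j.
  have /matrixP /(_ p q) := gP (delta_mx j k0).
  rewrite /P mulmx_sumr mulmx_suml !summxE.
  have L : forall r, r \in R -> (g *m (r *m delta_mx j k0 *m invmx r)) p q =
                               (bt r * invmx r k0 q) * (r *m g) p j.
    move=> r rR; rewrite !mulmxA btP // -!scalemxAl mxE delta_entry.
    by rewrite mulrAC mulrA.
  have Rr : forall r, (r *m delta_mx j k0 *m invmx r *m g) p q = (invmx r *m g) k0 q * r p j.
    by move=> r; rewrite -mulmxA delta_entry mulrC.
  rewrite (eq_big_seq _ L) (eq_bigr _ (fun r _ => Rr r)) => E.
  by under eq_bigr do rewrite mxE; under [RHS]eq_bigr do rewrite mxE.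
have fS : free (map (fun r => r *m g) R ++ R).
  apply: (free_G sH iH).
    move=> v; rewrite mem_cat => /orP [/mapP [r rR ->] | vR].
      exact: inG_mul (AG _ (RA _ rR)) gG.
    exact: AG (RA _ vR).
  rewrite pairwise_cat pairwise_map pwR andbT; apply/andP; split.
    apply/allrelP => u v /mapP [r rR ->] vR; apply/negP => /vlineP [l El].
    apply: Hno; exists (invmx r *m v), l; split; first exact: AM (AV _ (RA _ rR)) (RA _ vR).
    by rewrite scalemxAr -El mulKmx // uU.
  apply: sub_pairwise pwR => u v /negP nuv; apply/negP => /vlineP [l El]; apply: nuv.
  by apply/vlineP; exists l; apply: (mxcR gU); rewrite El scalemxAl.
rewrite cat_free in fS; case/and3P: fS => _ _ /directv_addP cap0.
have zero : forall k0 q, \sum_(r <- R) ((invmx r *m g) k0 q) *: r = 0.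
  move=> k0 q; apply/eqP; rewrite -memv0 -cap0 memv_cap; apply/andP; split.
    rewrite -ident big_seq; apply: rpred_sum => r rR; apply: memvZ.
    by apply: memv_span; apply: map_f.
  by rewrite big_seq; apply: rpred_sum => r rR; apply: memvZ; apply: memv_span.
have coef0 : forall k0 q, (invmx r0 *m g) k0 q = 0.
  move=> k0 q.
  have [kk _ kU] := free_span fR (mem0v <<R>>%VS).
  have e1 := kU (fun r => (invmx r *m g) k0 q) (esym (zero k0 q)) r0 r0R.
  have z0 : (0 : 'M[F]_n.+1) = \sum_(r <- R) (fun _ => 0) r *: r.
    by rewrite big1 // => r _; rewrite scale0r.
  have e2 := kU (fun _ => 0) z0 r0 r0R.
  by rewrite /= in e1 e2; rewrite e1 -e2.
have E0 : invmx r0 *m g = 0 by apply/matrixP => i j; rewrite coef0 mxE.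
have := unitmx_mul (invmx r0) g.
by rewrite E0 unitmx_inv (uU r0 r0R) gU (negPf (nunit0 _ _)).
Qed.

Lemma rootn_nz (F : fieldType) n (c : F) : c ^+ n.+1 = 1 -> c != 0.
Proof. by move=> E; apply/eqP => c0; move: E; rewrite c0 expr0n /= => /eqP; rewrite eq_sym oner_eq0. Qed.

Lemma pcent_PSL (F : numClosedFieldType) n (S : mset F n.+1) : is_PSL_subgroup (pcent S).
Proof.
split; first split.
- by move=> g [].
- split; first exact: det1.
  by move=> s _; exists 1; rewrite expr1n mul1mx mulmx1 scale1r.
- move=> g1 g2 [d1 P1] [d2 P2]; split; first by rewrite det_mulmx d1 d2 mulr1.
  move=> s Ss; have [c1 [e1 E1]] := P1 s Ss; have [c2 [e2 E2]] := P2 s Ss.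
  exists (c1 * c2); split; first by rewrite exprMn e1 e2 mulr1.
  by rewrite -mulmxA E2 -scalemxAr [g1 *m (s *m g2)]mulmxA E1 -scalemxAl scalerA mulmxA mulrC.
- move=> g [dg Pg]; split; first by rewrite det_inv dg invr1.
  move=> s Ss; have [c [e E]] := Pg s Ss.
  exists c^-1; split; first by rewrite exprVn e invr1.
  exact: invL (det1U dg) (rootn_nz e) E.
move=> g c [dg Pg] e; split; first by rewrite detZ dg e mulr1.
move=> s Ss; have [c' [e' E]] := Pg s Ss; exists c'; split => //.
by rewrite -scalemxAl E -scalemxAr scalerA mulrC -scalerA.
Qed.

Unset Implicit Arguments. Set Strict Implicit.

Theorem mainTheorem6 (F : numClosedFieldType) (n : nat) (H A : mset F n) :
  (0 < n)%N ->
  is_SL_subgroup H -> irreducible H ->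
  is_PSL_subgroup A -> (forall g, A g -> Zn H g) ->
  (forall g, pcent (pcent A) g <-> A g) /\
  (exists B : mset F n,
      [/\ is_PSL_subgroup B, irreducible B & forall g, pcent B g <-> A g]).
Proof.
case: n H A => // n H A _ sH iH pA AZn.
have [[dA A1 AM AV] AZ] := pA.
have satH : forall h, H h -> satur H h by move=> h Hh; exists h, 1; rewrite expr1n scale1r.
have AG : forall a, A a -> inG H a.
  move=> a Aa; have [_ Za] := AZn a Aa; split; first exact: det1U (dA a Aa).
  by move=> h Hh; have [c [_ Ec]] := Za h (satH h Hh); exists c.
have HinP : forall h, H h -> pcent A h.
  move=> h Hh; split; first by case: sH => dH _ _ _; apply: dH.
  move=> a Aa; have [_ Za] := AZn a Aa; have [c [cn Ec]] := Za h (satH h Hh).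
  exists c^-1; split; first by rewrite exprVn cn invr1.
  by rewrite Ec scalerA mulVf ?scale1r // (rootn_nz cn).
have part1 : forall g, pcent (pcent A) g <-> A g.
  move=> g; split; last first.
    move=> Ag; split; first exact: dA.
    move=> s [ds Ps]; have [c [e E]] := Ps g Ag.
    exists c^-1; split; first by rewrite exprVn e invr1.
    by rewrite E scalerA mulVf ?scale1r // (rootn_nz e).
  move=> [dg Pg].
  have gU := det1U dg.
  have gG : inG H g.
    split => // h Hh; have [c [_ E]] := Pg h (HinP h Hh); by exists c.
  have gC : forall x, (forall a, A a -> x *m a = a *m x) -> g *m x = x *m g.
    apply: (generic_comm gU).
      move=> x t Px a Aa; rewrite mulmxBl mulmxBr Px //.
      by rewrite scalar_mxC.
    move=> y Py yU.
    have dy : \det y != 0 by rewrite -unitfE -unitmxE.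
    pose r := n.+1.-root ((\det y)^-1).
    have er : r ^+ n.+1 = (\det y)^-1 by rewrite /r rootCK.
    have rnz : r != 0 by apply/eqP => r0; move: er; rewrite r0 expr0n /= => /esym /eqP; rewrite invr_eq0 (negPf dy).
    have Py' : pcent A (r *: y).
      split; first by rewrite detZ er mulVf.
      move=> a Aa; exists 1; split; first exact: expr1n.
      by rewrite scale1r -scalemxAl Py // scalemxAr.
    have [c [_ E]] := Pg _ Py'; exists c.
    apply: (scalerI rnz); move: E.
    by rewrite -scalemxAr -scalemxAl scalerA mulrC -scalerA.
  have [a [l [Aa El]]] := core sH iH pA AG gG gC.
  have el : l ^+ n.+1 = 1 by move: dg; rewrite El detZ dA // mulr1.
  by rewrite El; apply: AZ.
split => //; exists (pcent A); split => //; first exact: pcent_PSL.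
by move=> U HU; apply: iH => h Hh; apply: HU; apply: HinP.
Qed.
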